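(* Let $N\ge3$, $h=1/N$, $\rho_j=jh$, $I_j=[\rho_{j-1},\rho_j]$ ($j=1,\dots,N$, with $\rho_0\equiv\rho_N$ on $\mathbb{T}=\mathbb{R}/\mathbb{Z}$), and let $\mathbb{K}^h$ be the space of continuous periodic functions on $\mathbb{T}$ that are linear on each $I_j$. Let $\tau>0$ be arbitrary. Let $(\boldsymbol{X}^m,V^m,\kappa^m)\in[\mathbb{K}^h]^2\times\mathbb{K}^h\times\mathbb{K}^h$, $m\ge0$, be a sequence (with all segment lengths $|\boldsymbol{h}^m_j|>0$) such that for every $m\ge0$, $$\Big(\boldsymbol{n}^m\cdot\tfrac{\boldsymbol{X}^{m+1}-\boldsymbol{X}^m}{\tau},\phi^h\Big)_{\Gamma^m}=\big(V^{m+1},\phi^h\big)_{\Gamma^m}\quad\forall\phi^h\in\mathbb{K}^h,$$ $$\big(V^{m+1}\boldsymbol{n}^m,\boldsymbol{\omega}^h\big)_{\Gamma^m}=\Big(-\partial_s\kappa^{m+1}\,\boldsymbol{n}^m+\tfrac12(\kappa^{m+1})^2\partial_s\boldsymbol{X}^{m+1},\,\partial_s\boldsymbol{\omega}^h\Big)_{\Gamma^m}\quad\forall\boldsymbol{\omega}^h\in[\mathbb{K}^h]^2,$$ $$\Big(\tfrac{\kappa^{m+1}-\kappa^m}{\tau},\psi^h\Big)_{\Gamma^m}=\Big(\boldsymbol{n}^m\cdot\partial_s\big(\tfrac{\boldsymbol{X}^{m+1}-\boldsymbol{X}^m}{\tau}\big),\partial_s\psi^h\Big)_{\Gamma^m}-\Big(\big(\partial_s\boldsymbol{X}^{m+1}\cdot\partial_s\big(\tfrac{\boldsymbol{X}^{m+1}-\boldsymbol{X}^m}{\tau}\big)\big)\kappa^{m+1},\psi^h\Big)_{\Gamma^m}\quad\forall\psi^h\in\mathbb{K}^h.$$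 Define $W^m:=\tfrac14\sum_{j=1}^N|\boldsymbol{h}^m_j|\big[(\kappa^m(\rho_{j-1}))^2+(\kappa^m(\rho_j))^2\big]$. Then, without any restriction on $\tau$, $W^{m+1}\le W^m\le W^0$ for all $m\ge0$.
   Context: For $\boldsymbol{X}^m\in[\mathbb{K}^h]^2$, the polygon $\Gamma^m=\boldsymbol{X}^m(\mathbb{T})$ has edges $\boldsymbol{h}^m_j=\boldsymbol{X}^m(\rho_j)-\boldsymbol{X}^m(\rho_{j-1})$. In all expressions with subscript $\Gamma^m$ the discrete arc-length derivative is taken with respect to $\Gamma^m$: for $u\in\mathbb{K}^h$ (or $[\mathbb{K}^h]^2$), $\partial_s u|_{I_j}=\frac{u(\rho_j)-u(\rho_{j-1})}{|\boldsymbol{h}^m_j|}$; in particular $\partial_s\boldsymbol{X}^{m+1}|_{I_j}=\boldsymbol{h}^{m+1}_j/|\boldsymbol{h}^m_j|$. The normal is $\boldsymbol{n}^m|_{I_j}=-(\boldsymbol{h}^m_j)^\perp/|\boldsymbol{h}^m_j|$ with $(u_1,u_2)^\perp=(-u_2,u_1)$. Mass-lumped inner product: $(u,v)_{\Gamma^m}=\frac12\sum_{j=1}^N|\boldsymbol{h}^m_j|\big[(u\cdot v)(\rho_{j-1}^+)+(u\cdot v)(\rho_j^-)\big]$, one-sided limits taken within $I_j$. *)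

(* Defs.v *)
From HB Require Import structures.
From mathcomp Require Import all_boot all_order all_algebra.
From mathcomp Require Import reals.
Set Implicit Arguments. Unset Strict Implicit. Unset Printing Implicit Defensive.
Import Order.TTheory GRing.Theory Num.Theory.
Local Open Scope ring_scope.

(* A function u in K^h (continuous, periodic, piecewise linear on the uniform
   mesh rho_j = j/N) is represented by its nodal values u : 'I_N -> R, with
   u i = u(rho_i) (rho_0 = rho_N).  Vector-valued [K^h]^2 : 'I_N -> R * R.
   Element i (i : 'I_N) is the interval [rho_i, rho_(i+1 mod N)], i.e. the
   paper's I_(i+1); nxt i = i+1 mod N. *)

Section Defs.
Variable R : realType.
Variable N : nat.

Definition nxt (i : 'I_N) : 'I_N := ordS i.

Definition vadd (a b : R * R) : R * R := (a.1 + b.1, a.2 + b.2).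
Definition vsub (a b : R * R) : R * R := (a.1 - b.1, a.2 - b.2).
Definition vscal (k : R) (a : R * R) : R * R := (k * a.1, k * a.2).
Definition vdot (a b : R * R) : R := a.1 * b.1 + a.2 * b.2.
Definition vperp (a : R * R) : R * R := (- a.2, a.1).
Definition vnorm (a : R * R) : R := Num.sqrt (a.1 ^+ 2 + a.2 ^+ 2).

Definition edge (X : 'I_N -> R * R) (i : 'I_N) : R * R := vsub (X (nxt i)) (X i).
Definition elen (X : 'I_N -> R * R) (i : 'I_N) : R := vnorm (edge X i).

Definition normal (X : 'I_N -> R * R) (i : 'I_N) : R * R :=
  vscal (- (elen X i)^-1) (vperp (edge X i)).

Definition ds (X : 'I_N -> R * R) (u : 'I_N -> R) (i : 'I_N) : R :=
  (u (nxt i) - u i) / elen X i.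
Definition dsv (X : 'I_N -> R * R) (u : 'I_N -> R * R) (i : 'I_N) : R * R :=
  vscal (elen X i)^-1 (vsub (u (nxt i)) (u i)).

(* A (possibly discontinuous) function on the polygon, described by its
   one-sided values at the two ends of each element:
   f i false = value at the left end rho_i^+, f i true = value at rho_(i+1)^-. *)
Definition P1 (T : Type) (u : 'I_N -> T) : 'I_N -> bool -> T :=
  fun i e => if e then u (nxt i) else u i.
Definition P0 (T : Type) (c : 'I_N -> T) : 'I_N -> bool -> T :=
  fun i _ => c i.

Definition lumped (X : 'I_N -> R * R) (F : 'I_N -> bool -> R) : R :=
  2^-1 * \sum_(i < N) elen X i * (F i false + F i true).

Definition ip (X : 'I_N -> R * R) (f g : 'I_N -> bool -> R) : R :=
  lumped X (fun i e => f i e * g i e).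
Definition ipv (X : 'I_N -> R * R) (f g : 'I_N -> bool -> R * R) : R :=
  lumped X (fun i e => vdot (f i e) (g i e)).

Definition energy (X : 'I_N -> R * R) (k : 'I_N -> R) : R :=
  4^-1 * \sum_(i < N) elen X i * (k i ^+ 2 + k (nxt i) ^+ 2).

End Defs.

(* Main.v *)
Require Import Defs.
From HB Require Import structures.
From mathcomp Require Import all_boot all_order all_algebra.
From mathcomp Require Import reals ring lra.
Import Order.TTheory GRing.Theory Num.Theory.
Local Open Scope ring_scope.

Lemma sum_eq2 (R : realType) N (f g : 'I_N -> R) :
  2^-1 * \sum_(i < N) f i = 2^-1 * \sum_(i < N) g i -> \sum_(i < N) (f i - g i) = 0.
Proof.
move=> h; rewrite sumrB; apply/eqP; rewrite subr_eq0; apply/eqP.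
have h2 : (2^-1 : R) != 0 by rewrite invr_eq0 pnatr_eq0.
exact: (mulfI h2).
Qed.

Lemma sum_eq3 (R : realType) N (f g k : 'I_N -> R) :
  2^-1 * \sum_(i < N) f i = 2^-1 * \sum_(i < N) g i - 2^-1 * \sum_(i < N) k i ->
  \sum_(i < N) (f i - g i + k i) = 0.
Proof.
move=> h; rewrite big_split sumrB /=.
have h2 : (2^-1 : R) != 0 by rewrite invr_eq0 pnatr_eq0.
apply: (mulfI h2); rewrite mulr0 mulrDr mulrBr h; ring.
Qed.

Lemma combine (R : realType) N (F d1 d2 d3 : 'I_N -> R) (c : R) :
  \sum_(i < N) d1 i = 0 -> \sum_(i < N) d2 i = 0 -> \sum_(i < N) d3 i = 0 ->
  (forall i, F i <= c * d3 i + c * d2 i - c * d1 i) -> \sum_(i < N) F i <= 0.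
Proof.
move=> h1 h2 h3 hF.
apply: (le_trans (ler_sum _ (fun i _ => hF i))).
by rewrite sumrB big_split /= -!mulr_sumr h1 h2 h3 !mulr0 addr0 subr0.
Qed.

Theorem step (R : realType) (N : nat) (tau : R)
  (htau : 0 < tau)
  (X : nat -> 'I_N -> R * R) (V kappa : nat -> 'I_N -> R)
  (hlen : forall (m : nat) (j : 'I_N), 0 < elen (X m) j)
  (eq1 : forall (m : nat) (phi : 'I_N -> R),
     ip (X m)
        (fun i e => vdot (normal (X m) i)
                      (vscal tau^-1 (vsub (P1 (X m.+1) i e) (P1 (X m) i e))))
        (P1 phi)
     = ip (X m) (P1 (V m.+1)) (P1 phi))
  (eq2 : forall (m : nat) (omega : 'I_N -> R * R),
     ipv (X m)
         (fun i e => vscal (P1 (V m.+1) i e) (normal (X m) i))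
         (P1 omega)
     = ipv (X m)
         (fun i e => vadd (vscal (- ds (X m) (kappa m.+1) i) (normal (X m) i))
                          (vscal (2^-1 * (P1 (kappa m.+1) i e) ^+ 2)
                                 (dsv (X m) (X m.+1) i)))
         (P0 (dsv (X m) omega)))
  (eq3 : forall (m : nat) (psi : 'I_N -> R),
     ip (X m)
        (fun i e => (P1 (kappa m.+1) i e - P1 (kappa m) i e) / tau)
        (P1 psi)
     = ip (X m)
          (P0 (fun i => vdot (normal (X m) i)
                 (dsv (X m) (fun k => vscal tau^-1 (vsub (X m.+1 k) (X m k))) i)))
          (P0 (ds (X m) psi))
       - ip (X m)
          (fun i e => vdot (dsv (X m) (X m.+1) i)
                        (dsv (X m) (fun k => vscal tau^-1 (vsub (X m.+1 k) (X m k))) i)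
                      * P1 (kappa m.+1) i e)
          (P1 psi)) (m : nat) :
    energy (X m.+1) (kappa m.+1) <= energy (X m) (kappa m).
Proof.
have h1 := eq1 m (V m.+1).
have h2 := eq2 m (fun k => vscal tau^-1 (vsub (X m.+1 k) (X m k))).
have h3 := eq3 m (kappa m.+1).
rewrite /ip /ipv /lumped in h1 h2 h3.
move/sum_eq2: h1 => h1. move/sum_eq2: h2 => h2. move/sum_eq3: h3 => h3.
rewrite /energy ler_pM2l ?invr_gt0 ?ltr0n // -subr_le0 -sumrB.
apply: (@combine _ _ _ _ _ _ (2 * tau) h1 h2 h3) => i /=.
rewrite /P1 /P0 /normal /ds /dsv.
have hl := hlen m i.
have hl' := hlen m.+1 i.
move: hl hl'.
rewrite /elen /edge.
set a := X m i. set b := X m (nxt i). set a' := X m.+1 i. set b' := X m.+1 (nxt i).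
rewrite /vnorm /vdot /vscal /vsub /vadd /vperp /=.
set l := Num.sqrt ((b.1 - a.1) ^+ 2 + (b.2 - a.2) ^+ 2).
set l' := Num.sqrt ((b'.1 - a'.1) ^+ 2 + (b'.2 - a'.2) ^+ 2).
have ql : l ^+ 2 = (b.1 - a.1) ^+ 2 + (b.2 - a.2) ^+ 2.
  by rewrite sqr_sqrtr // addr_ge0 // sqr_ge0.
have ql' : l' ^+ 2 = (b'.1 - a'.1) ^+ 2 + (b'.2 - a'.2) ^+ 2.
  by rewrite sqr_sqrtr // addr_ge0 // sqr_ge0.
clearbody l l'.
set k1 := kappa m.+1 i. set k2 := kappa m.+1 (nxt i).
set k01 := kappa m i. set k02 := kappa m (nxt i).
set v1 := V m.+1 i. set v2 := V m.+1 (nxt i).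
move: a b a' b' ql ql' => [a1 a2] [b1 b2] [a1' a2'] [b1' b2'] /= ql ql' lpos l'pos.
have CS : (b1 - a1) * (b1' - a1') + (b2 - a2) * (b2' - a2') <= l * l'.
  have hsq : ((b1 - a1) * (b1' - a1') + (b2 - a2) * (b2' - a2')) ^+ 2 <= (l * l') ^+ 2.
    rewrite exprMn ql ql'.
    have := sqr_ge0 ((b1 - a1) * (b2' - a2') - (b2 - a2) * (b1' - a1')).
    move=> H; rewrite -subr_ge0; apply: (le_trans H); rewrite le_eqVlt; apply/orP; left; apply/eqP; ring.
  have hp : 0 <= l * l' by rewrite mulr_ge0 // ltW.
  set d := _ + _ in hsq *.
  case: (lerP d 0) => [hd|hd]; first exact: le_trans hd hp.
  by rewrite -(ler_pXn2r (n:=2)) // ?nnegrE // ltW.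
have HE : 0 <= l * ((k1 - k01) ^+ 2 + (k2 - k02) ^+ 2) + 2 * tau * l * (v1 ^+ 2 + v2 ^+ 2)
   + (k1 ^+ 2 + k2 ^+ 2) * (((b1' - a1') ^+ 2 + (b2' - a2') ^+ 2)
        - ((b1 - a1) * (b1' - a1') + (b2 - a2) * (b2' - a2')) - l * l' + l ^+ 2) / l.
  apply: addr_ge0; first apply: addr_ge0.
  - by apply: mulr_ge0; [exact: ltW | apply: addr_ge0; apply: sqr_ge0].
  - apply: mulr_ge0; last by apply: addr_ge0; apply: sqr_ge0.
    by apply: mulr_ge0; [apply: mulr_ge0; [by [] | exact: ltW] | exact: ltW].
  - apply: divr_ge0; last exact: ltW.
    apply: mulr_ge0; first by apply: addr_ge0; apply: sqr_ge0.
    rewrite -ql'.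
    have : 0 <= (l' - l) ^+ 2 by apply: sqr_ge0.
    move: CS; set c := _ + _; move=> CS H.
    have -> : l' ^+ 2 - c - l * l' + l ^+ 2 = (l' - l) ^+ 2 + (l * l' - c) by ring.
    by apply: addr_ge0; rewrite // subr_ge0.
rewrite -subr_ge0; apply: (le_trans HE); rewrite le_eqVlt; apply/orP; left; apply/eqP.
have l0 : l != 0 by rewrite gt_eqF.
have t0 : tau != 0 by rewrite gt_eqF.

by field; rewrite t0 l0.
Qed.

Theorem theorem4p1 (R : realType) (N : nat) (hN : (3 <= N)%N) (tau : R)
  (htau : 0 < tau)
  (X : nat -> 'I_N -> R * R) (V kappa : nat -> 'I_N -> R)
  (hlen : forall (m : nat) (j : 'I_N), 0 < elen (X m) j)
  (eq1 : forall (m : nat) (phi : 'I_N -> R),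
     ip (X m)
        (fun i e => vdot (normal (X m) i)
                      (vscal tau^-1 (vsub (P1 (X m.+1) i e) (P1 (X m) i e))))
        (P1 phi)
     = ip (X m) (P1 (V m.+1)) (P1 phi))
  (eq2 : forall (m : nat) (omega : 'I_N -> R * R),
     ipv (X m)
         (fun i e => vscal (P1 (V m.+1) i e) (normal (X m) i))
         (P1 omega)
     = ipv (X m)
         (fun i e => vadd (vscal (- ds (X m) (kappa m.+1) i) (normal (X m) i))
                          (vscal (2^-1 * (P1 (kappa m.+1) i e) ^+ 2)
                                 (dsv (X m) (X m.+1) i)))
         (P0 (dsv (X m) omega)))
  (eq3 : forall (m : nat) (psi : 'I_N -> R),
     ip (X m)
        (fun i e => (P1 (kappa m.+1) i e - P1 (kappa m) i e) / tau)
        (P1 psi)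
     = ip (X m)
          (P0 (fun i => vdot (normal (X m) i)
                 (dsv (X m) (fun k => vscal tau^-1 (vsub (X m.+1 k) (X m k))) i)))
          (P0 (ds (X m) psi))
       - ip (X m)
          (fun i e => vdot (dsv (X m) (X m.+1) i)
                        (dsv (X m) (fun k => vscal tau^-1 (vsub (X m.+1 k) (X m k))) i)
                      * P1 (kappa m.+1) i e)
          (P1 psi)) :
  forall m : nat,
    energy (X m.+1) (kappa m.+1) <= energy (X m) (kappa m)
    /\ energy (X m) (kappa m) <= energy (X 0%N) (kappa 0%N).
Proof.
have st := @step R N tau htau X V kappa hlen eq1 eq2 eq3.
move=> m; split; first exact: st.
elim: m => [|m IH]; first exact: lexx.
exact: le_trans (st m) IH.
Qed.
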